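(* For a selection $\mathtt{SEL}$ of the consistent set map, the chasing properties satisfy the implications (C) $\Rightarrow$ (A), (C) $\Rightarrow$ (D), (A) $\Rightarrow$ (B), and (D) $\Rightarrow$ (B); the reverse (and any other) implications between these properties do not hold in general.
   Context: $(\mathbb{T},\mathsf{K},d)$ is a compact parametrization of a set $\mathcal{F}$ of functions $\mathbb{N}\times\mathcal{X}\times\mathcal{U}\to\mathcal{X}$: $(\mathsf{K},d)$ compact metric, $\mathbb{T}:\mathsf{K}\to2^{\mathcal{F}}$, $\mathcal{F}\subseteq\bigcup_\theta\mathbb{T}[\theta]$. For a finite data set $\mathcal{D}$ of points $(t,x^+,x,u)$, $\mathsf{P}(\mathcal{D})$ is the closure of $\{\theta\in\mathsf{K}:\exists f\in\mathbb{T}[\theta],\ x^+=f(t,x,u)\ \forall(t,x^+,x,u)\in\mathcal{D}\}$; $\mathtt{SEL}$ is a selection if $\mathtt{SEL}[\mathcal{D}]\in\mathsf{P}(\mathcal{D})$. A property below holds for $\mathtt{SEL}$ if it holds for every data stream $\mathcal{D}_t=(d_1,\dots,d_t)$ for which some $f\in\mathcal{F}$ is consistent with all $\mathcal{D}_t$, with $\theta_t=\mathtt{SEL}[\mathcal{D}_t]$: (A) $\lim_t\theta_t$ exists; (B) $\lim_t d(\theta_t,\theta_{t-1})=0$; (C) ($\gamma$-competitive, some $\gamma$) $\sum_{t=t_1+1}^{t_2}d(\theta_t,\theta_{t-1})\le\gamma d_H(\mathsf{P}(\mathcal{D}_{t_2}),\mathsf{P}(\mathcal{D}_{t_1}))$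 for all $t_1<t_2$; (D) ($(\gamma,T)$-weakly competitive) the same inequality for all $t_1<t_2$ with $t_2-t_1\le T$. $d_H$ is the Hausdorff distance. *)

(* Defs.v *)
From HB Require Import structures.
From mathcomp Require Import all_boot all_order all_algebra.
From mathcomp Require Import all_classical all_reals all_analysis.
From Stdlib Require List.
Set Implicit Arguments. Unset Strict Implicit. Unset Printing Implicit Defensive.
Import Order.TTheory GRing.Theory Num.Theory.
Import numFieldTopology.Exports.
Local Open Scope classical_set_scope.
Local Open Scope ring_scope.

Definition fn (X U : Type) := nat -> X -> U -> X.

Record datum (X U : Type) := Datum { d_t : nat; d_xp : X; d_x : X; d_u : U }.

Definition consistent (X U : Type) (f : fn X U) (D : seq (datum X U)) : Prop :=
  List.Forall (fun d => d_xp d = f (d_t d) (d_x d) (d_u d)) D.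

Definition compact_param (R : realType) (X U : Type) (K : metricType R)
  (F : set (fn X U)) (T : K -> set (fn X U)) : Prop :=
  compact [set: K] /\ F `<=` \bigcup_(th in [set: K]) T th.

Definition Pset (R : realType) (X U : Type) (K : metricType R)
  (T : K -> set (fn X U)) (D : seq (datum X U)) : set K :=
  closure [set th | exists2 f, T th f & consistent f D].

Definition is_selection (R : realType) (X U : Type) (K : metricType R)
  (T : K -> set (fn X U)) (SEL : seq (datum X U) -> K) : Prop :=
  forall D, Pset T D !=set0 -> Pset T D (SEL D).

Definition dist_to_set (R : realType) (K : metricType R) (x : K) (B : set K) : R :=
  inf [set mdist x b | b in B].
Definition hdist (R : realType) (K : metricType R) (A B : set K) : R :=
  Num.max (sup [set dist_to_set a B | a in A]) (sup [set dist_to_set b A | b in B]).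

(* data stream d_1, d_2, ... is represented by d : nat -> datum (d_{i+1} = d i);
   D_t = (d_1,...,d_t) = mkseq d t; admissible: some f in F consistent with all D_t *)
Definition admissible (X U : Type) (F : set (fn X U)) (d : nat -> datum X U) : Prop :=
  exists2 f, F f & forall t, consistent f (mkseq d t).

Definition theta (X U : Type) (K : Type) (SEL : seq (datum X U) -> K)
  (d : nat -> datum X U) (t : nat) : K := SEL (mkseq d t).

Definition propA (R : realType) (X U : Type) (K : metricType R)
  (F : set (fn X U)) (T : K -> set (fn X U)) (SEL : seq (datum X U) -> K) : Prop :=
  forall d, admissible F d -> exists l : K, theta SEL d @ \oo --> l.

Definition propB (R : realType) (X U : Type) (K : metricType R)
  (F : set (fn X U)) (T : K -> set (fn X U)) (SEL : seq (datum X U) -> K) : Prop :=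
  forall d, admissible F d ->
    (fun t => mdist (theta SEL d t.+1) (theta SEL d t)) @ \oo --> (0 : R).

Definition competitive_ineq (R : realType) (X U : Type) (K : metricType R)
  (T : K -> set (fn X U)) (SEL : seq (datum X U) -> K) (d : nat -> datum X U)
  (gamma : R) (t1 t2 : nat) : Prop :=
  \sum_(t1 <= t < t2) mdist (theta SEL d t.+1) (theta SEL d t)
    <= gamma * hdist (Pset T (mkseq d t2)) (Pset T (mkseq d t1)).

Definition propC (R : realType) (X U : Type) (K : metricType R)
  (F : set (fn X U)) (T : K -> set (fn X U)) (SEL : seq (datum X U) -> K) : Prop :=
  exists gamma : R, 0 <= gamma /\
    forall d, admissible F d -> forall t1 t2 : nat, (t1 < t2)%N ->
      competitive_ineq T SEL d gamma t1 t2.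

Definition propD (R : realType) (X U : Type) (K : metricType R)
  (F : set (fn X U)) (T : K -> set (fn X U)) (SEL : seq (datum X U) -> K) : Prop :=
  exists (gamma : R) (Tw : nat), 0 <= gamma /\ (0 < Tw)%N /\
    forall d, admissible F d -> forall t1 t2 : nat, (t1 < t2)%N -> (t2 - t1 <= Tw)%N ->
      competitive_ineq T SEL d gamma t1 t2.

Definition not_implies (R : realType)
  (Px Py : forall (X U : Type) (K : metricType R),
     set (fn X U) -> (K -> set (fn X U)) -> (seq (datum X U) -> K) -> Prop) : Prop :=
  exists (X U : Type) (K : metricType R) (F : set (fn X U)) (T : K -> set (fn X U))
         (SEL : seq (datum X U) -> K),
    compact_param F T /\ is_selection T SEL /\ Px X U K F T SEL /\ ~ Py X U K F T SEL.

(* Main.v *)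
Require Import Defs.
From HB Require Import structures.
From mathcomp Require Import all_boot all_order all_algebra.
From mathcomp Require Import all_classical all_reals all_analysis.
Set Implicit Arguments. Unset Strict Implicit. Unset Printing Implicit Defensive.
Import Order.TTheory GRing.Theory Num.Theory.
Import numFieldTopology.Exports.
Local Open Scope classical_set_scope.
Local Open Scope ring_scope.
From mathcomp Require Import ring lra zify.
Section Gen.
Context {R : realType} {K : metricType R}.

Lemma dts_ge0 (x : K) B : 0 <= dist_to_set x B.
Proof.
rewrite /dist_to_set.
have [->|/set0P [b Bb]] := eqVneq B set0; first by rewrite image_set0 inf0.
apply: lb_le_inf; first by exists (mdist x b), b.
by move=> _ [c _ <-]; apply: mdist_ge0.
Qed.

Lemma dts_le (x : K) B b : B b -> dist_to_set x B <= mdist x b.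
Proof.
move=> Bb; rewrite /dist_to_set; apply: ge_inf; last by exists b.
by exists 0 => _ [c _ <-]; apply: mdist_ge0.
Qed.

Lemma dts_in (x : K) B : B x -> dist_to_set x B = 0.
Proof.
move=> Bx; apply/eqP; rewrite eq_le dts_ge0 andbT.
by have := dts_le x Bx; rewrite mdistxx.
Qed.

Lemma sup_ge0_img (E : set R) : (forall x, E x -> 0 <= x) -> 0 <= sup E.
Proof.
move=> E0; case: (pselect (has_sup E)) => [hs|hs]; last by rewrite sup_out.
case: (hs) => -[x Ex] _; apply: le_trans (E0 _ Ex) _.
exact: sup_upper_bound.
Qed.

Lemma sup_le_M (E : set R) M : 0 <= M -> (forall x, E x -> x <= M) -> sup E <= M.
Proof.
move=> M0 EM; have [->|/set0P ne] := eqVneq E set0; first by rewrite sup0.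
by apply: ge_sup => // x Ex; apply: EM.
Qed.

Lemma hdist_ge0 (A B : set K) : 0 <= hdist A B.
Proof.
rewrite /hdist le_max; apply/orP; left.
by apply: sup_ge0_img => _ [a _ <-]; apply: dts_ge0.
Qed.

Lemma dts_leM (x : K) B M : 0 <= M -> (forall a b : K, mdist a b <= M) ->
  dist_to_set x B <= M.
Proof.
move=> M0 HM; have [->|/set0P [b Bb]] := eqVneq B set0.
  by rewrite /dist_to_set image_set0 inf0.
exact: le_trans (dts_le x Bb) (HM _ _).
Qed.

Lemma hdist_leM (A B : set K) M : 0 <= M -> (forall a b : K, mdist a b <= M) ->
  hdist A B <= M.
Proof.
move=> M0 HM; rewrite /hdist ge_max; apply/andP; split;
  by apply: sup_le_M => // _ [a _ <-]; apply: dts_leM.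
Qed.

Lemma hdist_lb2 (A B : set K) M b r : (forall a b : K, mdist a b <= M) ->
  B b -> r <= dist_to_set b A -> r <= hdist A B.
Proof.
move=> HM Bb rb; rewrite /hdist le_max; apply/orP; right.
apply: le_trans rb _; apply: sup_upper_bound; last by exists b.
split; first by exists (dist_to_set b A), b.
exists (Num.max M 0) => _ [c _ <-].
have [->|/set0P [a Aa]] := eqVneq A set0.
  by rewrite /dist_to_set image_set0 inf0 le_max lexx orbT.
by rewrite le_max (le_trans (dts_le _ Aa) (HM _ _)).
Qed.

Lemma dts_lb (x : K) B r : B !=set0 -> (forall b, B b -> r <= mdist x b) ->
  r <= dist_to_set x B.
Proof.
move=> [b Bb] H; apply: lb_le_inf; first by exists (mdist x b), b.
by move=> _ [c Bc <-]; apply: H.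
Qed.

Lemma closure_mdist_lb (a : K) (S : set K) r :
  (forall s, S s -> r <= mdist a s) -> forall p, closure S p -> r <= mdist a p.
Proof.
move=> H p Sp; rewrite leNgt; apply/negP => pr.
have e0 : 0 < r - mdist a p by rewrite subr_gt0.
have := Sp _ (nbhsx_ballx p _ e0); case=> s [Ss].
rewrite ballEmdist /= => ps.
have := H _ Ss; rewrite leNgt => /negP; apply.
apply: le_lt_trans (metric_triangle a p s) _.
by rewrite -ltrBrDl.
Qed.

End Gen.

Lemma Forall_rcons {A : Type} (P : A -> Prop) (s : seq A) x :
  List.Forall P (rcons s x) <-> List.Forall P s /\ P x.
Proof.
elim: s => [|y s IH] /=; split.
- by move=> H; inversion H; split.
- by case=> _ Px; constructor.
- move=> H; inversion H; subst; have [? ?] := (proj1 IH) H3; split=> //; by constructor.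
- by case=> H Px; inversion H; subst; constructor => //; apply/IH.
Qed.

Lemma consP (X U : Type) (f : fn X U) (d : nat -> datum X U) t :
  consistent f (mkseq d t) <->
  forall i, (i < t)%N -> d_xp (d i) = f (d_t (d i)) (d_x (d i)) (d_u (d i)).
Proof.
elim: t => [|t IH]; first by split=> // _; constructor.
rewrite /consistent mkseqS Forall_rcons -/(consistent f (mkseq d t)) IH.
split=> [[H1 H2] i|H]; last first.
  by split=> [i it|]; apply: H => //; apply: ltnW.
rewrite ltnS leq_eqVlt => /orP[/eqP->//|]; exact: H1.
Qed.


Lemma compact_cauchy_cvg' {T : uniformType} (U : set T) (F : set_system T) :
  ProperFilter F -> cauchy F -> F U -> compact U -> exists x : T, F --> x.
Proof.
move=> PF cf FU cU; have [x [_ clFx]] := cU F PF FU; exists x.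
apply/cvg_entourageP => E entE.
have : nbhs entourage (split_ent E) by rewrite nbhs_filterE.
move=> /(cf (split_ent E))[] [D1 D2]/= /[!nbhs_simpl] -[FD1 FD2 D1D2E].
have : nbhs x (xsection (split_ent E) x) by exact: nbhs_entourage.
move=> /(clFx _ (xsection (split_ent E) x) FD1)[z [Dz /xsectionP Exz]].
by near=> t; apply/(entourage_split z entE Exz)/D1D2E; split => //; near: t.
Unshelve. all: by end_near. Qed.

Section Part1.
Context {R : realType} {X U : Type} {K : metricType R} (F : set (fn X U))
  (T : K -> set (fn X U)) (SEL : seq (datum X U) -> K).

Lemma Pset_nest d t s : (t <= s)%N -> Pset T (mkseq d s) `<=` Pset T (mkseq d t).
Proof.
move=> ts; apply: closureS => th [f Tf /consP cf]; exists f => //.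
by apply/consP => i it; apply: cf; apply: leq_trans ts.
Qed.

Lemma Pset_closed D : closed (Pset T D).
Proof. exact: closed_closure. Qed.

Lemma adm_point : compact_param F T -> forall d, admissible F d ->
  exists th, forall t, Pset T (mkseq d t) th.
Proof.
move=> [_ FT] d [f Ff cf]; have [th _ Tf] := FT f Ff.
by exists th => t; apply: subset_closure; exists f.
Qed.

Lemma mdist_cont (x0 : K) : continuous (fun y : K => mdist x0 y).
Proof.
move=> x; apply/cvgrPdist_lt => e e0.
apply: filterS (nbhsx_ballx x _ e0) => y; rewrite ballEmdist /= => xy.
have h1 := metric_triangle x0 x y; have h2 := metric_triangle x0 y x.
have h3 := metric_sym x y.
rewrite ltr_norml; apply/andP; split; lra.
Qed.

Lemma bounded_K : compact [set: K] -> forall x0 : K,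
  exists M, 0 <= M /\ forall a b : K, mdist a b <= M.
Proof.
move=> cK x0.
have [||c _ Hc] := @compact_EVT_max K R (fun y => mdist x0 y) setT _ cK.
- by exists x0.
- by apply: continuous_subspaceT; apply: mdist_cont.
exists (mdist x0 c *+ 2); split; first by rewrite mulrn_wge0 // mdist_ge0.
move=> a b; have h1 := metric_triangle a x0 b.
have h2 := Hc a (in_setT _); have h3 := Hc b (in_setT _).
have h4 := metric_sym a x0; rewrite /= in h2 h3; rewrite mulr2n; lra.
Qed.

Lemma CD_ : propC F T SEL -> propD F T SEL.
Proof.
move=> [g [g0 H]]; exists g, 1%N; split=> //; split=> // d ad t1 t2 t12 _.
exact: H.
Qed.

Lemma AB_ : propA F T SEL -> propB F T SEL.
Proof.
move=> HA d ad; have [l Hl] := HA d ad.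
apply/cvgrPdist_lt => e e0.
have e20 : 0 < e / 2 by rewrite divr_gt0.
have [N _ HN] := (proj1 (metricType_numDomainType.cvgrPdist_lt _ _) Hl) _ e20.
exists N => // t /= Nt; rewrite sub0r normrN ger0_norm ?mdist_ge0 //.
have h1 := HN t Nt; have h2 := HN t.+1 (leqW Nt); rewrite /= in h1 h2.
have h3 := metric_triangle (theta SEL d t.+1) l (theta SEL d t).
have h4 := metric_sym l (theta SEL d t.+1); lra.
Qed.

Let step d t := mdist (theta SEL d t.+1) (theta SEL d t).

Lemma tv_bound d n k :
  mdist (theta SEL d n) (theta SEL d (n + k)) <= \sum_(n <= t < n + k) step d t.
Proof.
elim: k => [|k IH]; first by rewrite addn0 mdistxx big_geq.
rewrite addnS big_nat_recr /=; last by rewrite leq_addr.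
apply: le_trans (metric_triangle _ (theta SEL d (n + k)) _) _.
by rewrite lerD // /step metric_sym.
Qed.

Lemma CA_ : compact_param F T -> propC F T SEL -> propA F T SEL.
Proof.
move=> cp [g [g0 Hg]] d ad.
have [M [M0 HM]] := bounded_K cp.1 (theta SEL d 0).
pose u n := \sum_(0 <= t < n) step d t.
have ge0 : forall t, 0 <= step d t by move=> t; apply: mdist_ge0.
have und : nondecreasing_seq u.
  apply/nondecreasing_seqP => n; rewrite /u big_nat_recr //=.
  by rewrite lerDl.
have ub : has_ubound (range u).
  exists (g * M) => _ [n _ <-]; case: n => [|n].
    by rewrite /u big_geq // mulr_ge0.
  apply: le_trans (Hg d ad 0%N n.+1 isT) _.
  by rewrite ler_wpM2l // hdist_leM.
have [l ul] : exists l : R, u @ \oo --> l.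
  by have h := nondecreasing_is_cvgn und ub; eexists; exact: h.
have cex : cauchy_ex (theta SEL d @ \oo).
  move=> e e0.
  have e20 : 0 < e / 2 by rewrite divr_gt0.
  have [N _ HN] := (proj1 (cvgrPdist_lt _ _) ul) _ e20.
  exists (theta SEL d N); exists N => // m /= Nm.
  rewrite ballEmdist /=.
  have := tv_bound d N (m - N); rewrite subnKC //.
  have -> : \sum_(N <= t < m) step d t = u m - u N.
    by rewrite /u (big_cat_nat (leq0n N) Nm) /= addrC addrK.
  have h1 := HN N (leqnn N); have h2 := HN m Nm; rewrite /= in h1 h2.
  move: h1 h2; rewrite !ltr_norml => /andP[h1 h1'] /andP[h2 h2'] h; lra.
have PF : ProperFilter (theta SEL d @ \oo) by apply: fmap_proper_filter.
have [x Hx] := @compact_cauchy_cvg' K setT _ PF (cauchy_exP _ cex) filterT cp.1.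
by exists x.
Qed.

Lemma haus_claim (P : nat -> set K) : compact [set: K] ->
  (forall n, closed (P n)) -> (forall n m, (n <= m)%N -> P m `<=` P n) ->
  forall e, 0 < e -> exists N, forall b, P N b ->
    exists q, (forall s, P s q) /\ mdist b q < e.
Proof.
move=> cK clP nP e e0; apply: contrapT => /forallNP HN.
pose C n := [set b | P n b /\ forall q, (forall s, P s q) -> e <= mdist b q].
have Cne n : C n !=set0.
  have /existsNP [b /not_implyP [Pb Hb]] := HN n; exists b; split=> // q Qq.
  by rewrite leNgt; apply/negP => bq; apply: Hb; exists q.
have FG : Filter (filter_from [set: nat] C).
  apply: filter_from_filter; first by exists 0%N.
  move=> i j _ _; exists (maxn i j) => // b [Pb Hb]; split; split=> //.
  - by apply: nP Pb; rewrite leq_maxl.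
  - by apply: nP Pb; rewrite leq_maxr.
have PG : ProperFilter (filter_from [set: nat] C).
  by apply: filter_from_proper => i _; apply: Cne.
have [p [_ clp]] := cK _ PG (filterT).
have Qp : forall s, P s p.
  move=> s; apply: clP => B Bp.
  have [b [[Pb _] Bb]] := clp (C s) B (ex_intro2 _ _ s I (@subset_refl _ _)) Bp.
  by exists b.
have [b [[_ Hb] bb]] := clp (C 0%N) (ball p e) (ex_intro2 _ _ 0%N I (@subset_refl _ _))
  (nbhsx_ballx p _ e0).
move: bb; rewrite ballEmdist /= metric_sym => bb.
by have := Hb p Qp; rewrite leNgt bb.
Qed.

Lemma DB_ : compact_param F T -> propD F T SEL -> propB F T SEL.
Proof.
move=> cp [g [Tw [g0 [Tw0 Hg]]]] d ad.
pose P t := Pset T (mkseq d t).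
have [th0 Hth0] := adm_point cp ad.
apply/cvgrPdist_lt => eps eps0.
pose e := eps / (g + 1).
have e0 : 0 < e by rewrite divr_gt0 // ltr_wpDl.
have ge : g * e + e = eps.
  have gp : g + 1 != 0 by rewrite gt_eqF // ltr_wpDl.
  by rewrite /e; field.
have [N HN] := @haus_claim (fun n => Pset T (mkseq d n)) cp.1 (fun n => Pset_closed (D := mkseq d n))
  (fun n m nm => Pset_nest (d := d) nm) e e0.
exists N => // t /= Nt.
rewrite sub0r normrN ger0_norm ?mdist_ge0 //.
have H1 := Hg d ad t t.+1 (ltnSn t) ltac:(by rewrite subSn // subnn).
rewrite /competitive_ineq big_nat1 in H1.
suff : hdist (Pset T (mkseq d t.+1)) (Pset T (mkseq d t)) <= e.
  move=> he; have : g * hdist (Pset T (mkseq d t.+1)) (Pset T (mkseq d t)) <= g * e.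
    by rewrite ler_wpM2l.
  lra.
rewrite /hdist ge_max; apply/andP; split; apply: sup_le_M; rewrite ?ltW //.
- move=> _ [a Pa <-]; rewrite dts_in ?ltW //.
  by apply: (Pset_nest (d := d) (leqnSn t)).
- move=> _ [b Pb <-].
  have [q [Qq bq]] := HN b (Pset_nest (d := d) Nt Pb).
  by apply: le_trans (dts_le _ (Qq t.+1)) _; rewrite ltW.
Qed.
End Part1.


Section KT.
Variable R : realType.

Definition wt (h : option nat) : R := if h is Some n then (n.+1%:R)^-1 else 0.
Definition rho (h h' : option nat) : R := if h == h' then 0 else Num.max (wt h) (wt h').

Lemma wt_ge0 h : 0 <= wt h.
Proof. by case: h => //= n; rewrite invr_ge0. Qed.

Lemma rho_ge0 h h' : 0 <= rho h h'.
Proof. rewrite /rho; case: ifP => // _; rewrite le_max wt_ge0 //. Qed.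

Lemma rho_sym h h' : rho h h' = rho h' h.
Proof. by rewrite /rho eq_sym maxC. Qed.

Lemma rho_eq0 h h' : rho h h' = 0 -> h = h'.
Proof.
rewrite /rho; case: eqP => // _.
case: h h' => [n|] [m|] //= /eqP; rewrite ?eq_le ?ge_max ?le_max ?lexx ?orbT.
- by rewrite leNgt invr_gt0 ltr0n.
- by rewrite andbT leNgt invr_gt0 ltr0n.
- by rewrite leNgt invr_gt0 ltr0n.
Qed.

Lemma rho_tri h1 h2 h3 : rho h1 h3 <= rho h1 h2 + rho h2 h3.
Proof.
have r12 := rho_ge0 h1 h2; have r23 := rho_ge0 h2 h3.
case: (eqVneq h1 h3) => [e13|ne13].
  by rewrite e13 /rho eqxx addr_ge0 // -e13.
case: (eqVneq h1 h2) => [e12|ne12].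
  by subst h2; rewrite {2}/rho eqxx add0r.
case: (eqVneq h2 h3) => [e23|ne23].
  by subst h3; rewrite {3}/rho eqxx addr0.
rewrite /rho (negbTE ne13) (negbTE ne12) (negbTE ne23).
have := wt_ge0 h1; have := wt_ge0 h2; have := wt_ge0 h3.
move=> c b a.
have m1 : wt h1 <= Num.max (wt h1) (wt h2) by rewrite le_max lexx.
have m2 : 0 <= Num.max (wt h2) (wt h3) by rewrite le_max b.
have m3 : wt h3 <= Num.max (wt h2) (wt h3) by rewrite le_max lexx orbT.
have m4 : 0 <= Num.max (wt h1) (wt h2) by rewrite le_max a.
rewrite ge_max; apply/andP; split; lra.
Qed.

Definition Kt := {p : R * option nat | (0 <= p.1 <= 1)}.
HB.instance Definition _ := Choice.on Kt.

Definition kd (p q : Kt) : R := `|(sval p).1 - (sval q).1| + rho (sval p).2 (sval q).2.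

Lemma kdxx p : kd p p = 0.
Proof. by rewrite /kd subrr normr0 add0r /rho eqxx. Qed.

Lemma kd_sym p q : kd p q = kd q p.
Proof. by rewrite /kd distrC rho_sym. Qed.

Lemma kd_pos p q : kd p q = 0 -> p = q.
Proof.
rewrite /kd => /eqP; rewrite paddr_eq0 ?normr_ge0 ?rho_ge0 // => /andP[/eqP a /eqP b].
apply: val_inj; move: a b; case: p q => [[x h] ?] [[y k] ?] /= /normr0_eq0 /eqP.
by rewrite subr_eq0 => /eqP -> /rho_eq0 ->.
Qed.

Lemma kd_tri q p r : kd p r <= kd p q + kd q r.
Proof.
rewrite /kd addrACA lerD //; first exact: ler_distD.
exact: rho_tri.
Qed.

HB.instance Definition _ := @isMetric.Build R Kt kd kdxx kd_pos kd_sym kd_tri.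


Definition clamp (r : R) : R := if r < 0 then 0 else if 1 < r then 1 else r.

Lemma clamp01 r : 0 <= clamp r <= 1.
Proof. rewrite /clamp; case: ifP => h1; [lra|case: ifP => h2; [lra|]]. 
move: h1 h2 => /negbT; rewrite -leNgt => h1 /negbT; rewrite -leNgt => h2; lra.
Qed.

Lemma clamp_id r : 0 <= r <= 1 -> clamp r = r.
Proof. by move=> /andP[h1 h2]; rewrite /clamp ltNge h1 /= ltNge h2. Qed.

Lemma clamp_lip a b : `|clamp a - clamp b| <= `|a - b|.
Proof.
have h1 := ler_norm (a - b); have h2 : b - a <= `|a - b| by rewrite distrC ler_norm.
rewrite ler_norml /clamp; case: (ltP a 0) => a0; case: (ltP b 0) => b0;
  case: (ltP 1 a) => a1; case: (ltP 1 b) => b1 /=; apply/andP; split; lra.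
Qed.

Definition mkK (r : R) (h : option nat) : Kt :=
  exist (fun p : R * option nat => (0 <= p.1 <= 1)) (clamp r, h) (clamp01 r).

Definition ft (c : nat -> bool) : option nat :=
  match pselect (exists n, c n) with left P => Some (ex_minn P) | right _ => None end.

Lemma ft_some c n : ft c = Some n -> c n /\ forall i, (i < n)%N -> ~~ c i.
Proof.
rewrite /ft; case: pselect => // P [<-]; case: ex_minnP => m cm mmin; split=> //.
by move=> i im; apply/negP => ci; have := mmin _ ci; rewrite leqNgt im.
Qed.

Lemma ft_none c : ft c = None -> forall i, ~~ c i.
Proof.
by rewrite /ft; case: pselect => // nP _ i; apply/negP => ci; apply: nP; exists i.
Qed.

Lemma ft_eq (c : nat -> bool) n : c n -> (forall i, (i < n)%N -> ~~ c i) -> ft c = Some n.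
Proof.
move=> cn H; case E: (ft c) => [m|]; last by have := ft_none E n; rewrite cn.
have [cm Hm] := ft_some E; congr Some; apply/eqP; rewrite eqn_leq.
apply/andP; split; rewrite leqNgt; apply/negP => h.
- by have := Hm _ h; rewrite cn.
- by have := H _ h; rewrite cm.
Qed.

Lemma wt_ft_bound (c : nat -> bool) M : (forall i, (i <= M)%N -> ~~ c i) -> wt (ft c) <= (M.+2%:R)^-1.
Proof.
move=> H; case E: (ft c) => [n|] /=; last by rewrite invr_ge0.
have [cn _] := ft_some E; have nM : (M < n)%N by rewrite ltnNge; apply/negP => /H; rewrite cn.
by rewrite lef_pV2 ?posrE ?ltr0n // ler_nat.
Qed.

Lemma rho_le_max h h' : rho h h' <= Num.max (wt h) (wt h').
Proof. by rewrite /rho; case: ifP => // _; rewrite le_max wt_ge0. Qed.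

Lemma ft_near (c c' : nat -> bool) M : (forall i, (i <= M)%N -> c' i = c i) ->
  rho (ft c) (ft c') <= (M.+2%:R)^-1.
Proof.
move=> H.
have [Hall|] := pselect (forall i, (i <= M)%N -> ~~ c i).
  apply: le_trans (rho_le_max _ _) _; rewrite ge_max; apply/andP; split.
    exact: wt_ft_bound.
  by apply: wt_ft_bound => i iM; rewrite H // Hall.
move=> /existsNP [i /not_implyP [iM /negP]]; rewrite negbK => ci.
case E: (ft c) => [n|]; last by have := ft_none E i; rewrite ci.
have [cn Hn] := ft_some E.
have ni : (n <= i)%N by rewrite leqNgt; apply/negP => /Hn; rewrite ci.
have nM : (n <= M)%N := leq_trans ni iM.
rewrite (@ft_eq c' n); first by rewrite /rho eqxx.
  by rewrite H.
by move=> j jn; rewrite H ?Hn // (leq_trans (ltnW jn)).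
Qed.

Definition Phi (z : R * cantor_space) : Kt := mkK z.1 (ft z.2).

Lemma cnb (c : cantor_space) i : nbhs c [set c' : cantor_space | c' i = c i].
Proof.
by have := @proj_continuous nat (fun=> bool) i c [set c i] (discrete_set1 (c i)).
Qed.

Lemma cnbM (c : cantor_space) M :
  nbhs c [set c' : cantor_space | forall i, (i <= M)%N -> c' i = c i].
Proof.
elim: M => [|M IH].
  by apply: filterS (cnb c 0) => c' h i; rewrite leqn0 => /eqP ->.
apply: filterS (filterI IH (cnb c M.+1)) => c' [h1 h2] i.
by rewrite leq_eqVlt => /orP[/eqP->//|]; rewrite ltnS; apply: h1.
Qed.

Lemma Phi_cont : continuous Phi.
Proof.
move=> [r c]; apply/metricType_numDomainType.cvgrPdist_lt => e e0.
have e20 : 0 < e / 2 by rewrite divr_gt0.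
pose M := Num.trunc (2 / e).
have HM : (M.+2%:R)^-1 < e / 2.
  have h := truncnS_gt (2 / e).
  rewrite -[e / 2]invf_div ltf_pV2 ?posrE ?ltr0n ?divr_gt0 //.
  by apply: lt_le_trans h _; rewrite ler_nat.
exists (ball r (e / 2), [set c' : cantor_space | forall i, (i <= M)%N -> c' i = c i]).
  by split; [apply: nbhsx_ballx|apply: cnbM].
move=> [r' c'] [/= rr cc].
change (kd (Phi (r, c)) (Phi (r', c')) < e).
rewrite /kd /=.
have h1 := clamp_lip r r'.
have h2 := ft_near cc.
move: rr; rewrite /ball /= => rr.
apply: le_lt_trans (lerD h1 h2) _; rewrite [X in _ < X]splitr; exact: ltrD.
Qed.

Lemma Kt_compact : compact [set: Kt].
Proof.
have : compact (Phi @` (`[0, 1]%classic `*` [set: cantor_space])).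
  apply: continuous_compact; first exact: continuous_subspaceT Phi_cont.
  by apply: compact_setX; [exact: segment_compact|exact: cantor_space_compact].
congr compact; apply/seteqP; split=> // -[[x h] px] _.
exists (x, if h is Some n then (fun i => i == n) else (fun _ => false)).
  by split=> //=; rewrite in_itv.
apply: val_inj; rewrite /= clamp_id //; congr pair.
case: h {px} => [n|].
  by rewrite (@ft_eq _ n) ?eqxx // => i /ltn_eqF ->.
by case E: ft => [m|] //; have [] := ft_some E.
Qed.

End KT.


Section Cos.
Variable R : realType.

Lemma cos_lip (a b : R) : `|cos a - cos b| <= `|a - b|.
Proof.
wlog ab : a b / a < b.
  move=> H; case: (ltgtP a b) => [|ba|->]; [exact: H| |by rewrite !subrr normr0].
  by rewrite distrC [X in _ <= X]distrC; apply: H.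
rewrite distrC; have [c _ ->] := @MVT R cos (fun x => - sin x) a b ab
  (fun x _ => is_derive_cos x) (continuous_subspaceT (@continuous_cos R)).
by rewrite normrM normrN [X in _ <= X]distrC ler_piMl // sin_max.
Qed.

Definition phi (x : R) : R := (1 - cos (pi * x)) / 2.

Lemma phi_lip x y : `|phi x - phi y| <= pi / 2 * `|x - y|.
Proof.
have -> : phi x - phi y = (cos (pi * y) - cos (pi * x)) / 2 by rewrite /phi; field.
have n2 : `|2^-1 : R| = 2^-1 by rewrite ger0_norm // invr_ge0.
rewrite normrM n2 mulrAC ler_wpM2r ?invr_ge0 //.
have := cos_lip (pi * y) (pi * x).
by rewrite -mulrBr normrM (ger0_norm (@pi_ge0 R)) [X in _ <= _ * X]distrC.
Qed.

Lemma cos_nat k : cos (pi * k%:R) = (if odd k then -1 else 1 : R).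
Proof.
elim: k => [|k IH]; first by rewrite mulr0 cos0.
rewrite -addn1 natrD mulrDr mulr1 cosDpi IH addn1 /=.
by case: (odd k) => //=; rewrite opprK.
Qed.

Lemma phi_nat k : phi k%:R = (odd k)%:R.
Proof. by rewrite /phi cos_nat; case: (odd k) => /=; field. Qed.

Lemma phi01 x : 0 <= phi x <= 1.
Proof.
rewrite /phi; have := cos_geN1 (pi * x); have := cos_le1 (pi * x).
move=> h1 h2; apply/andP; split; lra.
Qed.

Definition Hs (t : nat) : R := series (@harmonic R) t.

Lemma Hs_nd : nondecreasing_seq Hs.
Proof.
apply/nondecreasing_seqP => n; rewrite /Hs seriesSr lerDl; exact: harmonic_ge0.
Qed.

Lemma Hs_le t : Hs t <= t%:R.
Proof.
elim: t => [|t IH]; first by rewrite /Hs /series /= big_geq.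
rewrite /Hs seriesSr -/(Hs t) -addn1 natrD lerD //= invf_le1 // ler1n //.
Qed.

Lemma Hs_unb (k : R) : exists t, k <= Hs t.
Proof.
apply: contrapT => /forallNP H; apply: (@dvg_harmonic R).
apply: nondecreasing_is_cvgn; first exact: Hs_nd.
exists k => _ [n _ <-]; rewrite leNgt; apply/negP => h; apply: (H n).
by apply: ltW.
Qed.

Lemma Hs_hit (k : nat) : (0 < k)%N -> exists t, (k <= t)%N /\ `|Hs t - k%:R| <= (k%:R)^-1.
Proof.
move=> k0.
have ex : exists t, (k%:R <= Hs t) by apply: Hs_unb.
case: (ex_minnP ex) => tm Htm Hmin.
case: tm Htm Hmin => [|t'] Htm Hmin.
  by move: Htm; rewrite /Hs /series /= big_geq // lern0 => /eqP k0'; rewrite k0' in k0.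
have lt : Hs t' < k%:R.
  by rewrite ltNge; apply/negP => /Hmin; rewrite ltnn.
have kt : (k <= t'.+1)%N by rewrite -(ler_nat R); apply: le_trans Htm (Hs_le _).
exists t'.+1; split => //.
move: Htm; rewrite /Hs seriesSr -/(Hs t') /= => Htm.
have : (t'.+1%:R)^-1 <= (k%:R)^-1 :> R by rewrite lef_pV2 ?posrE ?ltr0n // ler_nat.
have kpos : 0 <= (k%:R)^-1 :> R by rewrite invr_ge0.
rewrite ler_norml => h; apply/andP; split.
  by apply: (@le_trans _ _ 0); [rewrite oppr_le0|rewrite subr_ge0].
by rewrite lerBlDr addrC; apply: lerD => //; apply: ltW.
Qed.

Lemma phi_near k : (16 <= k)%N -> exists t, (k <= t)%N /\ `|phi (Hs t) - (odd k)%:R| <= 8^-1.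
Proof.
move=> k16; have k0 : (0 < k)%N by apply: leq_trans k16.
have [t [kt ht]] := Hs_hit k0; exists t; split => //.
rewrite -phi_nat; apply: le_trans (phi_lip _ _) _.
have p2 : pi / 2 <= 2 :> R by have /andP[_ ->] := (@pihalf_02_cos_pihalf R).1.
have p0 : 0 <= pi / 2 :> R by rewrite divr_ge0 // pi_ge0.
have kk : (k%:R)^-1 <= (16%:R)^-1 :> R by rewrite lef_pV2 ?posrE ?ltr0n // ler_nat.
apply: le_trans (ler_pM p0 (normr_ge0 _) p2 (le_trans ht kk)) _.
have -> : (2 : R) * 16%:R^-1 = 8^-1 by field.
by [].
Qed.

Lemma kd_abs (p q : Kt R) : `|(sval p).1 - (sval q).1| <= kd p q.
Proof. by rewrite /kd lerDl rho_ge0. Qed.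

Lemma noconv : ~ exists l : Kt R, (fun t => mkK (phi (Hs t)) None) @ \oo --> l.
Proof.
move=> [l Hl].
have e0 : (0 : R) < 8^-1 by rewrite invr_gt0.
have [N _ HN] := (proj1 (metricType_numDomainType.cvgrPdist_lt _ _) Hl) _ e0.
have H t : (N <= t)%N -> `|(sval l).1 - phi (Hs t)| < 8^-1.
  move=> Nt; have := HN t Nt; rewrite /=.
  change (kd l (mkK (phi (Hs t)) None) < 8^-1 -> `|(sval l).1 - phi (Hs t)| < 8^-1).
  by move=> h; apply: le_lt_trans h; have := kd_abs l (mkK (phi (Hs t)) None);
    rewrite /= clamp_id // phi01.
have [t1 [kt1 h1]] := @phi_near (N + 16).*2 ltac:(lia).
have [t2 [kt2 h2]] := @phi_near (N + 16).*2.+1 ltac:(lia).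
have g1 := H t1 ltac:(lia).
have g2 := H t2 ltac:(lia).
move: h1 h2; rewrite /= !odd_double /= => h1 h2.
move: g1 g2 h1 h2; rewrite !ltr_norml !ler_norml => /andP[a1 a2] /andP[b1 b2] /andP[c1 c2] /andP[d1 d2].
lra.
Qed.

End Cos.


Section E3.
Variable R : realType.

Definition fh (h : option nat) : fn nat unit :=
  fun t _ _ => if h is Some n then nat_of_bool (t == n) else 0%N.
Definition T3 (th : Kt R) : set (fn nat unit) := [set fh (sval th).2].
Definition F3 : set (fn nat unit) := [set fh None].
Definition sD (D : seq (datum nat unit)) : R :=
  \sum_(n <- undup (map (@d_t _ _) D)) wt R (Some n).
Definition kD D : Kt R := mkK (phi (sD D)) None.
Definition SEL3 D : Kt R :=
  if pselect (Pset T3 D (kD D)) then kD D else xget (kD D) (Pset T3 D).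

Lemma cp3 : compact_param F3 T3.
Proof.
split; first exact: Kt_compact.
by move=> f ->; exists (mkK 0 None).
Qed.

Lemma sel3 : is_selection T3 SEL3.
Proof.
move=> D ne; rewrite /SEL3; case: (pselect (Pset T3 D (kD D))) => [h|nh].
  exact: h.
exact: xgetPex.
Qed.

Lemma adm3 d : admissible F3 d -> forall i, d_xp (d i) = 0%N.
Proof. by move=> [f -> cf] i; have /consP := cf i.+1; apply. Qed.

Lemma kD_in d : admissible F3 d -> forall t, Pset T3 (mkseq d t) (kD (mkseq d t)).
Proof.
move=> ad t; apply: subset_closure; exists (fh None) => //.
by apply/consP => i _; rewrite adm3.
Qed.

Lemma theta3 d : admissible F3 d -> forall t, theta SEL3 d t = kD (mkseq d t).
Proof.
move=> ad t; rewrite /theta /SEL3.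
case: (pselect (Pset T3 (mkseq d t) (kD (mkseq d t)))) => [h|nP] //.
by case: (nP (@kD_in d ad t)).
Qed.

Lemma sD_rcons D x : sD (rcons D x) =
  sD D + (if d_t x \in map (@d_t _ _) D then 0 else wt R (Some (d_t x))).
Proof.
rewrite /sD map_rcons; case: ifP => xin.
  rewrite addr0; apply: perm_big; apply: uniq_perm; rewrite ?undup_uniq //.
  by move=> y; rewrite !mem_undup mem_rcons in_cons; case: eqP => // ->.
have E : [seq y <- undup (map (@d_t _ _) D) | y != d_t x] = undup (map (@d_t _ _) D).
  apply/all_filterP/allP => y.
  by rewrite mem_undup; apply: contraTneq => ->; rewrite xin.
by rewrite undup_rcons big_rcons /= E.
Qed.

Lemma step3 D x : mdist (kD (rcons D x)) (kD D) <=
  pi / 2 * `|sD (rcons D x) - sD D|.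
Proof.
change (kd (kD (rcons D x)) (kD D) <= pi / 2 * `|sD (rcons D x) - sD D|).
rewrite /kd /= /rho eqxx addr0 !clamp_id ?phi01 //; exact: phi_lip.
Qed.

Lemma mem_mkseq_dt (d : nat -> datum nat unit) i t : (i < t)%N ->
  d_t (d i) \in map (@d_t _ _) (mkseq d t).
Proof.
move=> it; rewrite /mkseq -map_comp.
have := @map_f _ _ ((@d_t _ _) \o d) (iota 0 t) i; rewrite mem_iota /= it; apply => //.
Qed.

Lemma propD3 : propD F3 T3 SEL3.
Proof.
exists (pi / 2), 1%N; split; first by rewrite divr_ge0 // pi_ge0.
split=> // d ad t1 t2 lt12 le1.
have -> : t2 = t1.+1 by lia.
rewrite /competitive_ineq big_nat1 !theta3 //.
have [M [M0 HM]] := bounded_K (@Kt_compact R) (mkK 0 None).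
have pi0 : 0 <= pi / 2 :> R by rewrite divr_ge0 // pi_ge0.
rewrite [X in mdist (kD X) _]mkseqS.
apply: le_trans (step3 _ _) _.
rewrite sD_rcons addrC addKr.
case: ifP => nin.
  by rewrite normr0 mulr0 mulr_ge0 // hdist_ge0.
rewrite ler_wpM2l // ger0_norm ?wt_ge0 //.
set n := d_t (d t1).
apply: (@hdist_lb2 _ _ _ _ M (mkK 0 (Some n))) => //.
  apply: subset_closure; exists (fh (Some n)) => //; apply/consP => i it.
  rewrite adm3 //=; case: eqP => // ein.
  by move: nin; rewrite -/n -ein mem_mkseq_dt.
apply: dts_lb.
  by exists (kD (mkseq d t1.+1)); apply: (@kD_in d ad t1.+1).
apply: closure_mdist_lb => th [f Tf cf].
move: cf; rewrite mkseqS /consistent Forall_rcons => -[_ cx].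
rewrite Tf in cx; rewrite adm3 // in cx.
change (wt R (Some n) <= kd (mkK 0 (Some n)) th).
rewrite /kd /=; apply: (@le_trans _ _ (rho R (Some n) (sval th).2)); last by rewrite lerDr normr_ge0.
rewrite /rho; case: ifP => [/eqP hE|_].
  by move: cx; rewrite -hE /= -/n eqxx.
by rewrite le_max lexx.
Qed.

Lemma notA3 : ~ propA F3 T3 SEL3.
Proof.
move=> HA.
pose d0 := fun t : nat => Datum t 0%N 0%N tt.
have ad : admissible F3 d0 by exists (fh None) => // t; apply/consP.
have [l Hl] := HA d0 ad.
apply: (@noconv R); exists l.
have E : forall t, theta SEL3 d0 t = mkK (phi (Hs R t)) None.
  move=> t; rewrite theta3 // /kD; congr (mkK (phi _) None).
  rewrite /sD /mkseq -map_comp (@eq_map _ _ _ id) // map_id undup_id ?iota_uniq //.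
  by rewrite /Hs /series /= /index_iota subn0.
suff -> : (fun t => mkK (phi (Hs R t)) None) = theta SEL3 d0 by [].
by apply: funext => t; rewrite E.
Qed.
End E3.


Section E1.
Variable R : realType.
Definition F1 : set (fn unit unit) := setT.
Definition T1 (th : Kt R) : set (fn unit unit) := setT.
Definition k0 : Kt R := mkK 0 None.
Definition k1 : Kt R := mkK 1 None.
Definition SEL1 (D : seq (datum unit unit)) : Kt R := if size D == 0%N then k0 else k1.

Lemma cons1 (f : fn unit unit) D : consistent f D.
Proof.
elim: D => [|a D IH]; constructor => //.
by case: (d_xp a); case: (f _ _ _).
Qed.

Lemma Pset1 D : Pset T1 D = setT.
Proof.
apply/seteqP; split => // th _; apply: subset_closure.
by exists (fun _ _ _ => tt) => //; apply: cons1.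
Qed.

Lemma hdist1 D D' : hdist (Pset T1 D) (Pset T1 D') = 0.
Proof.
rewrite !Pset1; apply/eqP; rewrite eq_le hdist_ge0 andbT /hdist ge_max.
by apply/andP; split; apply: sup_le_M => // _ [a _ <-]; rewrite dts_in.
Qed.

Lemma cp1 : compact_param F1 T1.
Proof. by split; [exact: Kt_compact|move=> f _; exists k0]. Qed.

Lemma sel1 : is_selection T1 SEL1.
Proof. by move=> D _; rewrite Pset1. Qed.

Lemma propA1 : propA F1 T1 SEL1.
Proof.
move=> d ad; exists k1; apply/metricType_numDomainType.cvgrPdist_lt => e e0.
exists 1%N => // t /= t1.
rewrite /theta /SEL1 size_mkseq.
have -> : (t == 0%N) = false by apply/eqP => t0; rewrite t0 in t1.
by rewrite mdistxx.
Qed.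

Lemma k10 : mdist k1 k0 = 1.
Proof.
change (kd k1 k0 = 1); rewrite /kd /= /rho eqxx addr0 !clamp_id ?ler01 ?lexx //.
by rewrite subr0 normr1.
Qed.

Definition dd1 : nat -> datum unit unit := fun _ => Datum 0 tt tt tt.

Lemma ad1 : admissible F1 dd1.
Proof. by exists (fun _ _ _ => tt) => // t; apply: cons1. Qed.

Lemma step1 g : ~ competitive_ineq T1 SEL1 dd1 g 0 1.
Proof.
rewrite /competitive_ineq big_nat1 hdist1 mulr0 /theta /SEL1 !size_mkseq /=.
by rewrite k10 ler10.
Qed.

Lemma notC1 : ~ propC F1 T1 SEL1.
Proof. by move=> [g [_ H]]; apply: (step1 (H _ ad1 0%N 1%N isT)). Qed.

Lemma notD1 : ~ propD F1 T1 SEL1.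
Proof. by move=> [g [Tw [_ [Tw0 H]]]]; apply: (step1 (H _ ad1 0%N 1%N isT Tw0)). Qed.
End E1.

Theorem corollary1 (R : realType) :
  (forall (X U : Type) (K : metricType R) (F : set (fn X U)) (T : K -> set (fn X U))
          (SEL : seq (datum X U) -> K),
     compact_param F T -> is_selection T SEL ->
     [/\ propC F T SEL -> propA F T SEL,
         propC F T SEL -> propD F T SEL,
         propA F T SEL -> propB F T SEL &
         propD F T SEL -> propB F T SEL]) /\
  (not_implies (@propA R) (@propC R) /\
   not_implies (@propA R) (@propD R) /\
   not_implies (@propB R) (@propA R) /\
   not_implies (@propB R) (@propC R) /\
   not_implies (@propB R) (@propD R) /\
   not_implies (@propD R) (@propA R) /\
   not_implies (@propD R) (@propC R)).
Proof.
split.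
  move=> X U K F T SEL cp _; split.
  - exact: CA_ cp.
  - exact: CD_.
  - exact: AB_.
  - exact: DB_ cp.
split; first by exists unit, unit, (Kt R), F1, (@T1 R), (@SEL1 R); split; [exact: cp1|split; [exact: sel1|split; [exact: propA1|exact: notC1]]].
split; first by exists unit, unit, (Kt R), F1, (@T1 R), (@SEL1 R); split; [exact: cp1|split; [exact: sel1|split; [exact: propA1|exact: notD1]]].
split; first by exists nat, unit, (Kt R), F3, (@T3 R), (@SEL3 R); split; [exact: cp3|split; [exact: sel3|split; [exact: DB_ (@cp3 R) (@propD3 R)|exact: notA3]]].
split; first by exists unit, unit, (Kt R), F1, (@T1 R), (@SEL1 R); split; [exact: cp1|split; [exact: sel1|split; [exact: AB_ (@propA1 R)|exact: notC1]]].
split; first by exists unit, unit, (Kt R), F1, (@T1 R), (@SEL1 R); split; [exact: cp1|split; [exact: sel1|split; [exact: AB_ (@propA1 R)|exact: notD1]]].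
split; first by exists nat, unit, (Kt R), F3, (@T3 R), (@SEL3 R); split; [exact: cp3|split; [exact: sel3|split; [exact: propD3|exact: notA3]]].
exists nat, unit, (Kt R), F3, (@T3 R), (@SEL3 R); split; [exact: cp3|split; [exact: sel3|split; [exact: propD3|]]].
by move=> hC; apply: (@notA3 R); apply: CA_ (@cp3 R) hC.
Qed.
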